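(* The Petersen graph is not B-factorizable; moreover, there is $v\in\overline{\mathbf N}(PM(V))\cap\mathrm{problem}(V)$ with $E(v)$ equal to the Petersen graph and $2v\in\mathbf N(PM(V))$, which is an additional generator.
   Context: Let $V$ be a finite set with $|V|$ even (here $|V|=10$, the vertex set of the Petersen graph). $K=\binom{V}{2}$ is the set of 2-element subsets of $V$. An equal partition of $V$ is an unordered pair $\{H,A\}$ of disjoint subsets with $H\cup A=V$ and $|H|=|A|=|V|/2$; $C=C(V)$ is the set of equal partitions. For $c=\{H,A\}\in C$, $B_c$ is the complete bipartite graph with parts $H$ and $A$. Vectors live in $\mathbb N^{K\cup C}$ with $\mathbb N=\{0,1,2,\dots\}$; $v|_K$ denotes the restriction to coordinates in $K$. For $E\subseteq K$, $\chi_E\in\{0,1\}^K$ is its indicator vector; $\chi_K$ is the all-ones vector on $K$. For $E\subseteq K$ and $c\in C$, $\chi_{E,c}\in\mathbb N^{K\cup C}$ has $K$-components $\chi_E$ and $C$-components equal to the indicator of $c$. $PM(V)=\{\chi_{q,c}: c\in C,\ q\text{ a perfect matching of }B_c\}$. For $\mathcal M\subseteq\mathbb N^{K\cup C}$, $\mathbf N(\mathcal M)$ is the set of finite nonnegative integer combinations of elements of $\mathcal M$, and $\overline{\mathbf N}(\mathcal M)=\{v\in\mathbb N^{K\cup C}: kv\in\mathbf N(\mathcal M)\text{ for some integer }k\ge1\}$. For $v\in\mathbb N^{K\cup C}$, $E(v)=\{e\in K: v(e)=1\}$. $\mathrm{problem}(V)$ is the set of $v\in\mathbb N^{K\cup C}$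 such that $v|_K\le\chi_K$, the graph $(V,E(v))$ is regular, and $\frac{|V|}{2}\sum_{c\in C}v(c)=\sum_{e\in K}v(e)$. A regular graph $G=(V,E)$ is B-factorizable if every $v\in\overline{\mathbf N}(PM(V))$ with $v|_K=\chi_E$ belongs to $\mathbf N(PM(V))$. The monoid $\overline{\mathbf N}(PM(V))$ is pointed, hence has a unique inclusion-minimal generating set (as a monoid), its Hilbert basis. An additional generator is an element of the Hilbert basis of $\overline{\mathbf N}(PM(V))$ that does not belong to $PM(V)$. *)

(* Defs.v *)
From HB Require Import structures.
From mathcomp Require Import all_boot.
Set Implicit Arguments. Unset Strict Implicit. Unset Printing Implicit Defensive.

Section Defs.
Variable V : finType.

Definition K := {e : {set V} | #|e| == 2}.

(* C = equal partitions {H, A}, represented as the unordered pair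
   [set H; A] of subsets with A = ~: H and |H| = |A| = |V|/2 *)
Definition is_eqpart (P : {set {set V}}) : bool :=
  [exists H : {set V}, [&& #|H| == #|V| %/ 2, #|~: H| == #|V| %/ 2 &
                         P == [set H; ~: H]]].
Definition C := {P : {set {set V}} | is_eqpart P}.

Definition vec := {ffun (K + C)%type -> nat}.

Definition chiEc (E : {set K}) (c : C) : vec :=
  [ffun i => match i with inl e => nat_of_bool (e \in E)
                        | inr c' => nat_of_bool (c' == c) end].

Definition crosses (c : C) (e : K) : bool :=
  [forall H in val c, #|val e :&: H| == 1].
Definition perfect_matching_B (c : C) (q : {set K}) : bool :=
  [forall e in q, crosses c e] &&
  [forall x : V, #|[set e in q | x \in val e]| == 1].

Definition PM (v : vec) : Prop :=
  exists (c : C) (q : {set K}), perfect_matching_B c q /\ v = chiEc q c.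

Definition vsum (s : seq vec) : vec := [ffun i => \sum_(x <- s) x i].
Definition vscale (k : nat) (v : vec) : vec := [ffun i => k * v i].

Definition Ncomb (M : vec -> Prop) (v : vec) : Prop :=
  exists s : seq vec, (forall x, x \in s -> M x) /\ v = vsum s.

Definition Nbar (M : vec -> Prop) (v : vec) : Prop :=
  exists k : nat, 1 <= k /\ Ncomb M (vscale k v).

Definition Eof (v : vec) : {set K} := [set e | v (inl e) == 1].

Definition regular_graph (E : {set K}) : Prop :=
  exists d : nat, forall x : V, #|[set e in E | x \in val e]| = d.

Definition problem (v : vec) : Prop :=
  (forall e : K, v (inl e) <= 1) /\ regular_graph (Eof v) /\
  (#|V| %/ 2) * (\sum_(c : C) v (inr c)) = \sum_(e : K) v (inl e).

Definition B_factorizable (E : {set K}) : Prop :=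
  forall v : vec, Nbar PM v -> (forall e : K, v (inl e) = nat_of_bool (e \in E)) ->
    Ncomb PM v.

(* generating sets of a monoid Mon (given as a predicate), and the
   Hilbert basis = the (unique) inclusion-minimal generating set *)
Definition generating_set (Mon G : vec -> Prop) : Prop :=
  (forall x, G x -> Mon x) /\ (forall x, Mon x -> Ncomb G x).
Definition minimal_generating_set (Mon G : vec -> Prop) : Prop :=
  generating_set Mon G /\
  (forall G' : vec -> Prop, (forall x, G' x -> G x) -> generating_set Mon G' ->
     forall x, G x -> G' x).
Definition in_hilbert_basis (Mon : vec -> Prop) (v : vec) : Prop :=
  exists G : vec -> Prop, minimal_generating_set Mon G /\ G v.

Definition additional_generator (v : vec) : Prop :=
  in_hilbert_basis (Nbar PM) v /\ ~ PM v.

End Defs.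

(* The Petersen graph as the Kneser graph K(5,2): vertices are the
   2-subsets of {0,..,4}, adjacent iff disjoint. *)
Definition PV := {A : {set 'I_5} | #|A| == 2}.
Definition petersenE : {set K PV} :=
  [set e : K PV | [exists x : PV, exists y : PV,
     [&& x != y, [disjoint val x & val y] & val e == [set x; y]]]].

(* Main.v *)
Require Import Defs.
From mathcomp Require Import all_boot.
From Stdlib Require Classical.
Set Implicit Arguments. Unset Strict Implicit. Unset Printing Implicit Defensive.

Definition tbl (k : nat) : nat * nat :=
  match k with 0 => (0,1) | 1 => (0,2) | 2 => (0,3) | 3 => (0,4) | 4 => (1,2)
  | 5 => (1,3) | 6 => (1,4) | 7 => (2,3) | 8 => (2,4) | 9 => (3,4) | _ => (0,1) end.
Definition o5 (i : nat) : 'I_5 := Ordinal (ltn_pmod i (isT : 0 < 5)).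
Definition pvset k : {set 'I_5} := [set o5 (tbl k).1; o5 (tbl k).2].
Lemma pvsetP k : #|pvset k| == 2.
Proof. rewrite /pvset cards2. by do 10?[case: k => [|k]]. Qed.
Definition pv k : PV := exist _ (pvset k) (pvsetP k).

Lemma set2_eq (T : finType) (a b c d : T) : a != b ->
  ([set a; b] == [set c; d]) = ((a == c) && (b == d)) || ((a == d) && (b == c)).
Proof.
move=> ab; apply/eqP/idP.
- move/setP=> h.
  have /set2P [ac|ad] : a \in [set c; d] by rewrite -h set21.
  + have /set2P [bc|bd] : b \in [set c; d] by rewrite -h set22.
      by move: ab; rewrite ac bc eqxx.
    by rewrite ac bd !eqxx.
  + have /set2P [bc|bd] : b \in [set c; d] by rewrite -h set22.
      by rewrite ad bc !eqxx orbT.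
    by move: ab; rewrite ad bd eqxx.
- by case/orP => /andP [/eqP <- /eqP <-] //; rewrite setUC.
Qed.

Lemma pvE (x y : PV) : (x == y) = (val x == val y). Proof. by []. Qed.

Lemma pv_eq a b : a < 10 -> b < 10 -> (pv a == pv b) = (a == b).
Proof.
rewrite pvE /= /pvset.
do 10?[case: a => [|a]] => //= _; do 10?[case: b => [|b]] => //= _;
  by rewrite set2_eq.
Qed.

Lemma chk_iota n (P : pred nat) : all P (iota 0 n) -> forall m, m < n -> P m.
Proof. by move=> /allP h m hm; apply: h; rewrite mem_iota. Qed.

Definition vlist := [:: (0,1); (0,2); (0,3); (0,4); (1,2); (1,3); (1,4); (2,3); (2,4); (3,4)].
Definition code (i j : nat) := index (minn i j, maxn i j) vlist.

Lemma o5_val (i : 'I_5) : o5 i = i.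
Proof. by apply: val_inj; rewrite /= modn_small. Qed.

Lemma pv_surj (x : PV) : exists2 k, k < 10 & x = pv k.
Proof.
case: x => A hA. have /cards2P [i [j [ij eA]]] := hA. subst A.
have key: exists2 k, k < 10 & [set i; j] = pvset k.
  clear hA; rewrite -(o5_val i) -(o5_val j) in ij *.
  case: i ij => i hi; case: j => j hj /= ij.
  exists (code i j).
    by do 5?[case: i hi ij => [|i] hi ij] => //; do 5?[case: j hj ij => [|j] hj ij].
  by do 5?[case: i hi ij => [|i] hi ij] => //; do 5?[case: j hj ij => [|j] hj ij] => //;
     rewrite /pvset /=; first [reflexivity | apply: setUC].
case: key => k hk e; exists k => //; apply: val_inj => /=; exact: e.
Qed.

Definition elist := [:: (0, 7); (0, 8); (0, 9); (1, 5); (1, 6); (1, 9); (2, 4); (2, 6);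
  (2, 8); (3, 4); (3, 5); (3, 7); (4, 9); (5, 8); (6, 7)].
Definition etbl m := nth (0,1) elist m.

Lemma etbl_ok m : [&& (etbl m).1 < 10, (etbl m).2 < 10 & (etbl m).1 != (etbl m).2].
Proof. rewrite /etbl. do 15?[case: m => [|m]] => //. by rewrite nth_default. Qed.

Lemma epP m : #|[set pv (etbl m).1; pv (etbl m).2]| == 2.
Proof. by case/and3P: (etbl_ok m) => h1 h2 h3; rewrite cards2 pv_eq // h3. Qed.
Definition ep m : K PV := exist (fun e : {set PV} => #|e| == 2) _ (epP m).

Lemma epE (x y : K PV) : (x == y) = (val x == val y). Proof. by []. Qed.

Lemma etbl_inj_chk : all (fun m => all (fun n =>
  ((((etbl m).1 == (etbl n).1) && ((etbl m).2 == (etbl n).2)) ||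
   (((etbl m).1 == (etbl n).2) && ((etbl m).2 == (etbl n).1))) == (m == n)) (iota 0 15)) (iota 0 15).
Proof. by []. Qed.

Lemma ep_eq m n : m < 15 -> n < 15 -> (ep m == ep n) = (m == n).
Proof.
move=> hm hn; case/and3P: (etbl_ok m) => h1 h2 h3; case/and3P: (etbl_ok n) => g1 g2 g3.
rewrite epE /= set2_eq ?pv_eq //.
have := chk_iota etbl_inj_chk hm => /allP /(_ n).
by rewrite mem_iota add0n hn => /(_ isT) /eqP.
Qed.

Lemma in_ep a m : a < 10 -> (pv a \in val (ep m)) = (a == (etbl m).1) || (a == (etbl m).2).
Proof.
move=> ha; case/and3P: (etbl_ok m) => h1 h2 h3.
by rewrite /= in_set2 !pv_eq.
Qed.

Lemma dis2 (T : finType) (i j : T) (B : {set T}) :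
  [disjoint [set i; j] & B] = (i \notin B) && (j \notin B).
Proof. by rewrite disjoints_subset subUset !sub1set !inE. Qed.

Lemma ep_in_E m : m < 15 -> ep m \in petersenE.
Proof.
move=> hm; rewrite inE; apply/existsP; exists (pv (etbl m).1); apply/existsP; exists (pv (etbl m).2).
case/and3P: (etbl_ok m) => h1 h2 h3.
rewrite eqxx andbT pv_eq // h3 /= /pvset dis2 !in_set2.
by clear h1 h2 h3; do 15?[case: m hm => [|m] hm].
Qed.

Definition eidx a b := index (minn a b, maxn a b) elist.

Lemma dis_key a b : a < 10 -> b < 10 -> [disjoint pvset a & pvset b] ->
  exists2 m, m < 15 & [set pv a; pv b] = [set pv (etbl m).1; pv (etbl m).2].
Proof.
move=> ha hb; rewrite /pvset dis2 !in_set2 => hd; exists (eidx a b); move: ha hb hd.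
  by do 10?[case: a => [|a]] => //; do 10?[case: b => [|b]].
by do 10?[case: a => [|a]] => //; do 10?[case: b => [|b]] => //= _ _ _;
  first [reflexivity | apply: setUC].
Qed.

Lemma E_ep (e : K PV) : e \in petersenE -> exists2 m, m < 15 & e = ep m.
Proof.
rewrite inE => /existsP [x /existsP [y /and3P [xy dis /eqP ev]]].
case: (pv_surj x) => a ha ex; case: (pv_surj y) => b hb ey; subst x y.
case: (dis_key ha hb dis) => m hm em; exists m => //.
by apply: val_inj; rewrite ev em.
Qed.

Definition ilist := [:: [:: 0; 1; 2]; [:: 3; 4; 5]; [:: 6; 7; 8]; [:: 9; 10; 11]; [:: 6; 9; 12];
  [:: 3; 10; 13]; [:: 4; 7; 14]; [:: 0; 11; 14]; [:: 1; 8; 13]; [:: 2; 5; 12]].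
Definition inc a := nth [::] ilist a.

Definition lt15 := fun m : nat => m < 15.
Definition lt10 := fun m : nat => m < 10.

Lemma mem_map_ep m l : m < 15 -> all lt15 l -> (ep m \in map ep l) = (m \in l).
Proof.
move=> hm; elim: l => //= n l IH /andP [hn hl].
by rewrite !inE ep_eq // IH.
Qed.

Lemma mem_map_pv a l : a < 10 -> all lt10 l -> (pv a \in map pv l) = (a \in l).
Proof.
move=> ha; elim: l => //= n l IH /andP [hn hl].
by rewrite !inE pv_eq // IH.
Qed.

Lemma uniq_map_ep l : all lt15 l -> uniq (map ep l) = uniq l.
Proof.
move=> /allP hl; apply: map_inj_in_uniq => m n hm hn /eqP.
rewrite ep_eq; [by move/eqP | exact: (hl _ hm) | exact: (hl _ hn)].
Qed.

Lemma uniq_map_pv l : all lt10 l -> uniq (map pv l) = uniq l.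
Proof.
move=> /allP hl; apply: map_inj_in_uniq => m n hm hn /eqP.
rewrite pv_eq; [by move/eqP | exact: (hl _ hm) | exact: (hl _ hn)].
Qed.

Lemma card_seqset (T : finType) (s : seq T) (P : pred T) : uniq s ->
  #|[set e in [set:: s] | P e]| = count P s.
Proof.
move=> us.
have -> : [set e in [set:: s] | P e] = [set:: filter P s].
  by apply/setP => e; rewrite !inE mem_filter andbC.
by rewrite cardsE; move/card_uniqP: (filter_uniq P us) => ->; rewrite size_filter.
Qed.

Lemma in_seqset (T : finType) (s : seq T) x : (x \in [set:: s]) = (x \in s).
Proof. by rewrite inE. Qed.

Lemma card_seqset1 (T : finType) (s : seq T) : uniq s -> #|[set:: s]| = size s.
Proof. by move=> us; rewrite cardsE; move/card_uniqP: us. Qed.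

Lemma cardsI2 (T : finType) (x y : T) (A : {set T}) : x != y ->
  #|[set x; y] :&: A| = (x \in A) + (y \in A).
Proof.
move=> xy.
have -> : [set x; y] :&: A = [set e in [set:: [:: x; y]] | e \in A].
  by apply/setP => e; rewrite !inE.
by rewrite card_seqset /= ?addn0 // inE xy.
Qed.

Lemma inc_chk : all (fun a => all (fun m =>
   ((a == (etbl m).1) || (a == (etbl m).2)) == (m \in inc a)) (iota 0 15)) (iota 0 10).
Proof. by []. Qed.

Lemma inc_ok : all (fun a => all lt15 (inc a) && uniq (inc a) && (size (inc a) == 3)) (iota 0 10).
Proof. by []. Qed.

Lemma E_set : petersenE = [set:: map ep (iota 0 15)].
Proof.
apply/setP => e; rewrite in_seqset; apply/idP/idP.
  case/E_ep => m hm ->; rewrite mem_map_ep; [by rewrite mem_iota | exact: hm | by []].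
by case/mapP => m; rewrite mem_iota add0n => hm ->; apply: ep_in_E.
Qed.

Lemma inc_set a : a < 10 ->
  [set e in petersenE | pv a \in val e] = [set:: map ep (inc a)].
Proof.
move=> ha; have /andP [/andP [/allP hl _] _] := chk_iota inc_ok ha.
rewrite E_set; apply/setP => e; rewrite in_seqset in_set in_seqset.
case: (boolP (e \in map ep (iota 0 15))) => [/mapP [m hm ->]|ne] /=.
  move: hm; rewrite mem_iota add0n => hm.
  rewrite in_ep // mem_map_ep //; last by apply/allP.
  have := chk_iota inc_chk ha => /allP /(_ m).
  by rewrite mem_iota add0n hm => /(_ isT) /eqP.
apply/esym/negbTE; apply: contra ne => /mapP [m hm ->].
by rewrite mem_map_ep ?mem_iota //; have := hl m hm.
Qed.

Lemma card_E : #|petersenE| = 15.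
Proof. by rewrite E_set card_seqset1 // uniq_map_ep. Qed.

Lemma card_PV : #|{: PV}| = 10.
Proof.
rewrite -cardsT (_ : [set: PV] = [set:: map pv (iota 0 10)]).
  by rewrite card_seqset1 // uniq_map_pv.
apply/setP => x; rewrite in_seqset in_setT; case: (pv_surj x) => a ha ->.
by rewrite mem_map_pv; [rewrite mem_iota | exact: ha | ].
Qed.

Definition Hset l : {set PV} := [set:: map pv l].
Lemma in_Hset a l : a < 10 -> all lt10 l -> (pv a \in Hset l) = (a \in l).
Proof. by move=> ha hl; rewrite in_seqset mem_map_pv. Qed.
Lemma card_Hset l : all lt10 l -> uniq l -> #|Hset l| = size l.
Proof. by move=> hl ul; rewrite card_seqset1 ?size_map // uniq_map_pv. Qed.

Lemma cutP l : all lt10 l -> uniq l -> size l = 5 -> is_eqpart [set Hset l; ~: Hset l].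
Proof.
move=> hl ul sl; apply/existsP; exists (Hset l).
have h := cardsC (Hset l); rewrite card_Hset // sl in h.
have h2 : #|~: Hset l| = 5.
  by apply/eqP; rewrite -(eqn_add2l 5) h card_PV.
by rewrite card_Hset // sl h2 card_PV eqxx.
Qed.

Definition mkC l (h : is_eqpart [set Hset l; ~: Hset l]) : C PV := exist (@is_eqpart PV) _ h.

Lemma crossesE l (h : is_eqpart [set Hset l; ~: Hset l]) e :
  crosses (mkC h) e = (#|val e :&: Hset l| == 1) && (#|val e :&: ~: Hset l| == 1).
Proof.
apply/forall_inP/andP => [H | [h1 h2] X /set2P [->|->] //].
by split; apply: H; rewrite /= ?set21 ?set22.
Qed.

Definition Mset l : {set K PV} := [set:: map ep l].

Lemma pmP lc (hc : is_eqpart [set Hset lc; ~: Hset lc]) l :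
  all lt15 l -> uniq l -> all lt10 lc ->
  all (fun m => ((etbl m).1 \in lc) + ((etbl m).2 \in lc) == 1) l ->
  all (fun a => count (fun m => (a == (etbl m).1) || (a == (etbl m).2)) l == 1) (iota 0 10) ->
  perfect_matching_B (mkC hc) (Mset l).
Proof.
move=> hl ul hlc /allP hcr hdeg; apply/andP; split.
  apply/forall_inP => e; rewrite in_seqset => /mapP [m hm ->].
  case/and3P: (etbl_ok m) => h1 h2 h3.
  rewrite crossesE /= !cardsI2 ?pv_eq // !in_setC !in_Hset //.
  by move: (hcr m hm); case: (_ \in lc); case: (_ \in lc).
apply/forallP => x; case: (pv_surj x) => a ha ->.
rewrite /Mset card_seqset ?uniq_map_ep // count_map.
rewrite (@eq_count _ _ (fun m => (a == (etbl m).1) || (a == (etbl m).2))); last first.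
  by move=> m /=; exact: in_ep.
exact: chk_iota hdeg a ha.
Qed.

Definition h1l := [:: 0; 1; 2; 4; 5].
Definition h2l := [:: 0; 1; 3; 4; 6].
Definition h3l := [:: 0; 1; 4; 7; 8].
Lemma c1P : is_eqpart [set Hset h1l; ~: Hset h1l]. Proof. exact: cutP. Qed.
Lemma c2P : is_eqpart [set Hset h2l; ~: Hset h2l]. Proof. exact: cutP. Qed.
Lemma c3P : is_eqpart [set Hset h3l; ~: Hset h3l]. Proof. exact: cutP. Qed.
Definition c1 := mkC c1P.
Definition c2 := mkC c2P.
Definition c3 := mkC c3P.

Definition m1 := [:: 0; 4; 8; 10; 12].
Definition m2 := [:: 0; 5; 7; 9; 13].
Definition m3 := [:: 1; 3; 7; 11; 12].
Definition m4 := [:: 1; 5; 6; 10; 14].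
Definition m5 := [:: 2; 3; 8; 9; 14].
Definition m6 := [:: 2; 4; 6; 11; 13].

Lemma pm1 : perfect_matching_B c1 (Mset m1). Proof. exact: pmP. Qed.
Lemma pm2 : perfect_matching_B c1 (Mset m2). Proof. exact: pmP. Qed.
Lemma pm3 : perfect_matching_B c2 (Mset m3). Proof. exact: pmP. Qed.
Lemma pm4 : perfect_matching_B c2 (Mset m4). Proof. exact: pmP. Qed.
Lemma pm5 : perfect_matching_B c3 (Mset m5). Proof. exact: pmP. Qed.
Lemma pm6 : perfect_matching_B c3 (Mset m6). Proof. exact: pmP. Qed.

Lemma c12 : c1 != c2.
Proof.
apply/negP => /eqP /(congr1 val) e12.
have : Hset h1l \in val c1 by rewrite /= set21.
rewrite e12 /= => /set2P [e|e].
  have h : pv 2 \in Hset h1l by rewrite in_Hset.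
  by move: h; rewrite e in_Hset.
have h : pv 0 \in Hset h1l by rewrite in_Hset.
by move: h; rewrite e in_setC in_Hset.
Qed.

Notation vecP := (vec PV).
Definition vzero : vecP := [ffun _ => 0].
Definition vadd (a b : vecP) : vecP := [ffun i => a i + b i].

Lemma vsum_nil : vsum [::] = vzero.
Proof. by apply/ffunP => i; rewrite !ffunE big_nil. Qed.
Lemma vsum_cons (x : vecP) s : vsum (x :: s) = vadd x (vsum s).
Proof. by apply/ffunP => i; rewrite !ffunE big_cons. Qed.
Lemma vsum_cat (s1 s2 : seq vecP) : vsum (s1 ++ s2) = vadd (vsum s1) (vsum s2).
Proof. by apply/ffunP => i; rewrite !ffunE big_cat. Qed.
Lemma vadd0 (x : vecP) : vadd x vzero = x.
Proof. by apply/ffunP => i; rewrite !ffunE addn0. Qed.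

Lemma Ncomb_add (P : vecP -> Prop) a b : Ncomb P a -> Ncomb P b -> Ncomb P (vadd a b).
Proof.
case=> s1 [h1 ->]; case=> s2 [h2 ->]; exists (s1 ++ s2); split; last by rewrite vsum_cat.
by move=> x; rewrite mem_cat => /orP [/h1|/h2].
Qed.

Lemma Ncomb0 (P : vecP -> Prop) : Ncomb P vzero.
Proof. by exists [::]; split => //; rewrite vsum_nil. Qed.

Lemma Ncomb_scale (P : vecP -> Prop) k a : Ncomb P a -> Ncomb P (vscale k a).
Proof.
move=> ha; elim: k => [|k IH].
  have -> : vscale 0 a = vzero by apply/ffunP => i; rewrite !ffunE.
  exact: Ncomb0.
have -> : vscale k.+1 a = vadd a (vscale k a) by apply/ffunP => i; rewrite !ffunE mulSn.
exact: Ncomb_add.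
Qed.

Lemma Nbar_add (P : vecP -> Prop) a b : Nbar P a -> Nbar P b -> Nbar P (vadd a b).
Proof.
case=> k1 [hk1 h1]; case=> k2 [hk2 h2]; exists (k1 * k2); split; first by rewrite muln_gt0 hk1.
have -> : vscale (k1 * k2) (vadd a b) = vadd (vscale k2 (vscale k1 a)) (vscale k1 (vscale k2 b)).
  by apply/ffunP => i; rewrite !ffunE mulnDr mulnA [k2 * k1]mulnC mulnA.
by apply: Ncomb_add; apply: Ncomb_scale.
Qed.

Lemma Nbar0 (P : vecP -> Prop) : Nbar P vzero.
Proof.
exists 1; split => //.
have -> : vscale 1 vzero = vzero by apply/ffunP => i; rewrite !ffunE.
exact: Ncomb0.
Qed.

Lemma Nbar_vsum (P : vecP -> Prop) s : (forall x, x \in s -> Nbar P x) -> Nbar P (vsum s).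
Proof.
elim: s => [|x s IH] h; first by rewrite vsum_nil; apply: Nbar0.
rewrite vsum_cons; apply: Nbar_add; first by apply: h; rewrite inE eqxx.
by apply: IH => y hy; apply: h; rewrite inE hy orbT.
Qed.

Definition wt (x : vecP) := \sum_i x i.

Lemma wt_add a b : wt (vadd a b) = wt a + wt b.
Proof. by rewrite /wt -big_split; apply: eq_bigr => i _; rewrite ffunE. Qed.

Lemma nz_coord (x : vecP) : x != vzero -> exists i, 0 < x i.
Proof.
move=> nz; apply/existsP; apply: contraR nz => /existsPn h.
apply/eqP/ffunP => i; rewrite ffunE; have := h i; by rewrite lt0n negbK => /eqP.
Qed.

Lemma wt_gt0 (x : vecP) : x != vzero -> 0 < wt x.
Proof.
case/nz_coord => i hi; rewrite /wt (bigD1 i) //=.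
exact: leq_trans hi (leq_addr _ _).
Qed.

Lemma vadd_nz a b : a != vzero -> vadd a b != vzero.
Proof.
case/nz_coord => i hi; apply/eqP => /ffunP /(_ i); rewrite !ffunE => h.
by move/eqP: h; rewrite addn_eq0 => /andP [/eqP h0 _]; rewrite h0 in hi.
Qed.

Definition Irr (x : vecP) : Prop :=
  [/\ Nbar (@PM PV) x, x != vzero &
    ~ exists a b, [/\ Nbar (@PM PV) a, Nbar (@PM PV) b, a != vzero, b != vzero & x = vadd a b]].

Lemma gen_Irr n x : wt x <= n -> Nbar (@PM PV) x -> Ncomb Irr x.
Proof.
elim: n x => [|n IH] x hw hx.
  case: (eqVneq x vzero) => [->|nz]; first exact: Ncomb0.
  by have := wt_gt0 nz; rewrite leqNgt; move: hw; rewrite leqn0 => /eqP ->.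
case: (eqVneq x vzero) => [->|nz]; first exact: Ncomb0.
case: (Classical_Prop.classic (exists a b, [/\ Nbar (@PM PV) a, Nbar (@PM PV) b,
      a != vzero, b != vzero & x = vadd a b])) => [[a [b [ha hb nza nzb ex]]]|nex].
  rewrite ex; subst x; rewrite wt_add in hw.
  apply: Ncomb_add; apply: IH => //.
    by rewrite -ltnS; apply: leq_trans hw; rewrite -addn1 leq_add2l wt_gt0.
  by rewrite -ltnS; apply: leq_trans hw; rewrite -add1n leq_add2r wt_gt0.
exists [:: x]; split; last by rewrite vsum_cons vsum_nil vadd0.
by move=> y; rewrite inE => /eqP ->; split.
Qed.

Lemma Irr_min (G' : vecP -> Prop) : (forall x, G' x -> Irr x) ->
  generating_set (Nbar (@PM PV)) G' -> forall x, Irr x -> G' x.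
Proof.
move=> sub [_ gen] x [hx nz nred].
case: (gen x hx) => s [hs ex].
case: s hs ex => [|y [|z t]] hs ex.
- by move: nz; rewrite ex vsum_nil eqxx.
- by rewrite ex vsum_cons vsum_nil vadd0; apply: hs; rewrite inE eqxx.
- exfalso; apply: nred; exists y, (vsum (z :: t)).
  have hy : Irr y by apply: sub; apply: hs; rewrite inE eqxx.
  have hz : Irr z by apply: sub; apply: hs; rewrite !inE eqxx orbT.
  case: hy => hy1 hy2 _; case: hz => hz1 hz2 _.
  split => //.
  + apply: Nbar_vsum => w hw.
    have : Irr w by apply: sub; apply: hs; rewrite inE hw orbT.
    by case.
  + by rewrite vsum_cons; apply: vadd_nz.
  + by rewrite ex vsum_cons.
Qed.

Lemma hilbert_Irr x : Irr x -> in_hilbert_basis (Nbar (@PM PV)) x.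
Proof.
move=> hx; exists Irr; split => //; split; last exact: Irr_min.
split; first by move=> y [].
move=> y hy; exact: (@gen_Irr (wt y)).
Qed.

Definition ex1 (a b c : bool) := (a && ~~b && ~~c) || (~~a && b && ~~c) || (~~a && ~~b && c).
Ltac solve_bits := intros; repeat match goal with
 | H : is_true false |- _ => discriminate H
 | b : bool |- _ => destruct b; simpl in *
 end.
Lemma twoPM_bits (x y : nat -> bool) :
  ex1 (x 0) (x 1) (x 2) -> ex1 (x 3) (x 4) (x 5) -> ex1 (x 6) (x 7) (x 8) ->
  ex1 (x 9) (x 10) (x 11) -> ex1 (x 6) (x 9) (x 12) -> ex1 (x 3) (x 10) (x 13) ->
  ex1 (x 4) (x 7) (x 14) -> ex1 (x 0) (x 11) (x 14) -> ex1 (x 1) (x 8) (x 13) ->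
  ex1 (x 2) (x 5) (x 12) ->
  ex1 (y 0) (y 1) (y 2) -> ex1 (y 3) (y 4) (y 5) -> ex1 (y 6) (y 7) (y 8) ->
  ex1 (y 9) (y 10) (y 11) -> ex1 (y 6) (y 9) (y 12) -> ex1 (y 3) (y 10) (y 13) ->
  ex1 (y 4) (y 7) (y 14) -> ex1 (y 0) (y 11) (y 14) -> ex1 (y 1) (y 8) (y 13) ->
  ex1 (y 2) (y 5) (y 12) ->
  (forall m, ~~ (x m && y m)) -> False.
Proof.
move=> H1 H2 H3 H4 H5 H6 H7 H8 H9 H10 G1 G2 G3 G4 G5 G6 G7 G8 G9 G10 D.
have D0 := D 0. have D1 := D 1. have D2 := D 2. have D3 := D 3. have D4 := D 4.
have D5 := D 5. have D6 := D 6. have D7 := D 7. have D8 := D 8. have D9 := D 9.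
have D10 := D 10. have D11 := D 11. have D12 := D 12. have D13 := D 13. have D14 := D 14.
clear D. rewrite /ex1 in H1 H2 H3 H4 H5 H6 H7 H8 H9 H10 G1 G2 G3 G4 G5 G6 G7 G8 G9 G10.
move: H1 H2 H3 H4 H5 H6 H7 H8 H9 H10 G1 G2 G3 G4 G5 G6 G7 G8 G9 G10 D0 D1 D2 D3 D4 D5 D6 D7 D8 D9 D10 D11 D12 D13 D14.
generalize (x 0) (x 1) (x 2) (x 3) (x 4) (x 5) (x 6) (x 7) (x 8) (x 9) (x 10) (x 11) (x 12) (x 13) (x 14).
generalize (y 0) (y 1) (y 2) (y 3) (y 4) (y 5) (y 6) (y 7) (y 8) (y 9) (y 10) (y 11) (y 12) (y 13) (y 14).
solve_bits.
Qed.

Lemma setI_sub (T : finType) (q E : {set T}) (P : pred T) : q \subset E ->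
  [set e in q | P e] = q :&: [set e in E | P e].
Proof.
move=> sub; apply/setP => e; rewrite !inE; case: (boolP (e \in q)) => //= h.
by rewrite (subsetP sub e h).
Qed.

Lemma cardI_seqset (T : finType) (q : {set T}) (s : seq T) : uniq s ->
  #|q :&: [set:: s]| = count (mem q) s.
Proof.
move=> us.
have -> : q :&: [set:: s] = [set e in [set:: s] | e \in q].
  by apply/setP => e; rewrite !inE andbC.
exact: card_seqset.
Qed.

Lemma vertex_ex1 (q : {set K PV}) : (forall e, e \in q -> e \in petersenE) ->
  (forall x : PV, #|[set e in q | x \in val e]| == 1) ->
  forall a, a < 10 -> ex1 (ep (nth 0 (inc a) 0) \in q) (ep (nth 0 (inc a) 1) \in q)
                          (ep (nth 0 (inc a) 2) \in q).
Proof.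
move=> sub hq a ha.
have /andP [/andP [hl ul] /eqP sz] := chk_iota inc_ok ha.
have := hq (pv a); rewrite (setI_sub _ (E := petersenE)); last by apply/subsetP.
rewrite (inc_set ha) cardI_seqset ?uniq_map_ep //.
case: (inc a) sz ul hl => [|i [|j [|k [|]]]] //= _ _ _.
rewrite addn0.
by case: (ep i \in q); case: (ep j \in q); case: (ep k \in q).
Qed.

Lemma twoPM_sets (q1 q2 : {set K PV}) :
  (forall e, e \in q1 -> e \in petersenE) -> (forall e, e \in q2 -> e \in petersenE) ->
  (forall x : PV, #|[set e in q1 | x \in val e]| == 1) ->
  (forall x : PV, #|[set e in q2 | x \in val e]| == 1) ->
  (forall e, e \in q1 -> e \notin q2) -> False.
Proof.
move=> s1 s2 h1 h2 d.
have V1 := vertex_ex1 s1 h1; have V2 := vertex_ex1 s2 h2.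
apply: (@twoPM_bits (fun m => ep m \in q1) (fun m => ep m \in q2)
  (V1 0 isT) (V1 1 isT) (V1 2 isT) (V1 3 isT) (V1 4 isT) (V1 5 isT) (V1 6 isT)
  (V1 7 isT) (V1 8 isT) (V1 9 isT)
  (V2 0 isT) (V2 1 isT) (V2 2 isT) (V2 3 isT) (V2 4 isT) (V2 5 isT) (V2 6 isT)
  (V2 7 isT) (V2 8 isT) (V2 9 isT)).
move=> m /=; apply/negP => /andP [a b].
by move: (d _ a); rewrite b.
Qed.

Lemma core (y : vecP) : Nbar (@PM PV) y -> y != vzero ->
  exists c q, perfect_matching_B c q /\ (forall e, e \in q -> 0 < y (inl e)).
Proof.
case=> k [hk [s [hs ex]]] nz.
case: s hs ex => [|x t] hs ex.
  exfalso; move/negP: nz; apply; apply/eqP/ffunP => i.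
  have := congr1 (fun f : vecP => f i) ex; rewrite vsum_nil !ffunE => /eqP.
  rewrite muln_eq0 => /orP [/eqP k0|/eqP ->] //.
  by rewrite k0 in hk.
have [c [q [pm ex2]]] : PM x by apply: hs; rewrite inE eqxx.
exists c, q; split => // e he.
have := congr1 (fun f : vecP => f (inl e)) ex; rewrite vsum_cons ex2 /= !ffunE he /=.
move=> h; rewrite lt0n; apply/negP => /eqP y0.
by rewrite y0 muln0 in h.
Qed.

Definition vv : vecP := [ffun i => match i with
  | inl e => nat_of_bool (e \in petersenE)
  | inr c => (c == c1) + (c == c2) + (c == c3) end].

Lemma vvK e : vv (inl e) = nat_of_bool (e \in petersenE).
Proof. by rewrite ffunE. Qed.

Definition s2 : seq vecP := [:: chiEc (Mset m1) c1; chiEc (Mset m2) c1; chiEc (Mset m3) c2;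
  chiEc (Mset m4) c2; chiEc (Mset m5) c3; chiEc (Mset m6) c3].

Lemma chiEcE (V : finType) (q : {set K V}) c x : chiEc q c x =
  match x with inl e => nat_of_bool (e \in q) | inr c' => nat_of_bool (c' == c) end.
Proof. by rewrite ffunE. Qed.
Lemma chiEc_inl (V : finType) (q : {set K V}) c e : chiEc q c (inl e) = nat_of_bool (e \in q).
Proof. by rewrite ffunE. Qed.
Lemma chiEc_inr (V : finType) (q : {set K V}) c c' : chiEc q c (inr c') = nat_of_bool (c' == c).
Proof. by rewrite ffunE. Qed.
Lemma vvC c : vv (inr c) = (c == c1) + (c == c2) + (c == c3).
Proof. by rewrite ffunE. Qed.
Lemma vscaleE k (x : vecP) i : vscale k x i = k * x i.
Proof. by rewrite ffunE. Qed.
Lemma vsumE (V : finType) (s : seq (vec V)) i : vsum s i = \sum_(x <- s) x i.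
Proof. by rewrite ffunE. Qed.
Lemma vaddE (a b : vecP) i : vadd a b i = a i + b i.
Proof. by rewrite ffunE. Qed.

Lemma vsum_consE (V : finType) (x : vec V) s i : vsum (x :: s) i = x i + vsum s i.
Proof. by rewrite !ffunE big_cons. Qed.
Lemma vsum_nilE (V : finType) i : @vsum V [::] i = 0.
Proof. by rewrite ffunE big_nil. Qed.
Lemma sum6_inl (V : finType) (M1 M2 M3 M4 M5 M6 : {set K V}) (d1 d2 d3 d4 d5 d6 : C V) (e : K V) :
  vsum [:: chiEc M1 d1; chiEc M2 d2; chiEc M3 d3; chiEc M4 d4; chiEc M5 d5; chiEc M6 d6] (inl e)
  = (e \in M1) + ((e \in M2) + ((e \in M3) + ((e \in M4) + ((e \in M5) + ((e \in M6) + 0))))).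
Proof.
rewrite !vsum_consE vsum_nilE.
congr (_ + (_ + (_ + (_ + (_ + (_ + _)))))); exact: chiEc_inl.
Qed.
Lemma sum6_inr (V : finType) (M1 M2 M3 M4 M5 M6 : {set K V}) (d1 d2 d3 d4 d5 d6 : C V) (c : C V) :
  vsum [:: chiEc M1 d1; chiEc M2 d2; chiEc M3 d3; chiEc M4 d4; chiEc M5 d5; chiEc M6 d6] (inr c)
  = (c == d1) + ((c == d2) + ((c == d3) + ((c == d4) + ((c == d5) + ((c == d6) + 0))))).
Proof.
rewrite !vsum_consE vsum_nilE.
congr (_ + (_ + (_ + (_ + (_ + (_ + _)))))); exact: chiEc_inr.
Qed.

Lemma arith6 (T : finType) (M1 M2 M3 M4 M5 M6 : {set T}) x (b1 b2 b3 b4 b5 b6 : bool) :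
  (x \in M1) = b1 -> (x \in M2) = b2 -> (x \in M3) = b3 ->
  (x \in M4) = b4 -> (x \in M5) = b5 -> (x \in M6) = b6 ->
  (x \in M1) + ((x \in M2) + ((x \in M3) + ((x \in M4) + ((x \in M5) + ((x \in M6) + 0))))) =
  b1 + (b2 + (b3 + (b4 + (b5 + (b6 + 0))))).
Proof. by move=> -> -> -> -> -> ->. Qed.

Lemma arith_inr (T : eqType) (c d1 d2 d3 : T) :
  2 * ((c == d1) + (c == d2) + (c == d3)) =
  (c == d1) + ((c == d1) + ((c == d2) + ((c == d2) + ((c == d3) + ((c == d3) + 0))))).
Proof. by case: (c == d1); case: (c == d2); case: (c == d3). Qed.

Lemma in_Mset l m : m < 15 -> all lt15 l -> (ep m \in Mset l) = (m \in l).
Proof. by move=> hm hl; rewrite /Mset in_seqset mem_map_ep. Qed.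

Lemma two_v_inl (e : K PV) : vscale 2 vv (inl e) = vsum s2 (inl e).
Proof.
rewrite vscaleE vvK /s2 sum6_inl.
case: (boolP (e \in petersenE)) => hE.
  case: (E_ep hE) => m hm ee; subst e.
  apply: (etrans _ (esym (arith6 (@in_Mset m1 m hm isT) (@in_Mset m2 m hm isT) (@in_Mset m3 m hm isT)
    (@in_Mset m4 m hm isT) (@in_Mset m5 m hm isT) (@in_Mset m6 m hm isT)))).
  by move: hm; clear; do 15?[case: m => [|m]].
have F : forall l, all lt15 l -> (e \in Mset l) = false.
  move=> l hl; apply/negbTE; apply: contra hE; rewrite in_seqset => /mapP [m hm ->].
  by apply: ep_in_E; exact: (allP hl m hm).
by apply: (etrans _ (esym (arith6 (F m1 isT) (F m2 isT) (F m3 isT) (F m4 isT) (F m5 isT) (F m6 isT)))).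
Qed.

Lemma two_v_inr (c : C PV) : vscale 2 vv (inr c) = vsum s2 (inr c).
Proof. by rewrite vscaleE vvC /s2 sum6_inr arith_inr. Qed.

Lemma two_v : vscale 2 vv = vsum s2.
Proof. apply/ffunP => [[e|c]]; [exact: two_v_inl | exact: two_v_inr]. Qed.

Lemma pmx (c : C PV) (q : {set K PV}) : perfect_matching_B c q -> PM (chiEc q c).
Proof. by move=> h; exists c, q. Qed.

Lemma s2_PM x : x \in s2 -> PM x.
Proof.
rewrite /s2 !inE; do ?[case/orP => [/eqP ->|]]; try move/eqP ->; apply: pmx.
- exact: pm1.
- exact: pm2.
- exact: pm3.
- exact: pm4.
- exact: pm5.
- exact: pm6.
Qed.

Lemma N2 : Ncomb (@PM PV) (vscale 2 vv).
Proof. exists s2; split; [exact: s2_PM | exact: two_v]. Qed.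

Lemma Nb : Nbar (@PM PV) vv.
Proof. exists 2; split => //; exact: N2. Qed.

Lemma gen_eq1 (T : eqType) (a b d x : T) : (a == a) + (a == b) + (a == d) = (a == x) -> a == x.
Proof. by rewrite eqxx; case: (a == x) => //; rewrite add1n addSn. Qed.
Lemma gen_eq2 (T : eqType) (a b d x : T) : (b == a) + (b == b) + (b == d) = (b == x) -> b == x.
Proof. by rewrite eqxx; case: (b == x) => //; rewrite addnC addnA addn1. Qed.
Lemma gen_pos (T : eqType) (a b d : T) : 0 < (a == a) + (a == b) + (a == d).
Proof. by rewrite eqxx. Qed.

Lemma Irr_vv : Irr vv.
Proof.
split; first exact: Nb.
  apply/eqP => /ffunP /(_ (inr c1)); rewrite vvC => h.
  by move: (gen_pos c1 c2 c3); rewrite h ffunE.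
case=> a [b [ha hb nza nzb ex]].
case: (core ha nza) => ca [qa [pma posa]].
case: (core hb nzb) => cb [qb [pmb posb]].
have hE : forall e, (e \in petersenE : nat) = a (inl e) + b (inl e).
  by move=> e; have := congr1 (fun f : vecP => f (inl e)) ex; rewrite vvK vaddE.
apply: (@twoPM_sets qa qb).
- move=> e he; have : 0 < (e \in petersenE : nat).
    by rewrite hE; exact: leq_trans (posa e he) (leq_addr _ _).
  by case: (e \in petersenE).
- move=> e he; have : 0 < (e \in petersenE : nat).
    by rewrite hE; exact: leq_trans (posb e he) (leq_addl _ _).
  by case: (e \in petersenE).
- by case/andP: pma => _ /forallP.
- by case/andP: pmb => _ /forallP.
- move=> e he; apply/negP => hb'.
  have := leq_b1 (e \in petersenE); rewrite hE.
  have := posa e he; have := posb e hb'.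
  case: (a (inl e)) => [|x] //; case: (b (inl e)) => [|y] //.
  by rewrite addSn addnS.
Qed.

Lemma nPM : ~ PM vv.
Proof.
case=> c [q [_ ev]].
have h1 := congr1 (fun f : vecP => f (inr c1)) ev.
have h2 := congr1 (fun f : vecP => f (inr c2)) ev.
rewrite /= vvC chiEcE /= in h1.
rewrite /= vvC chiEcE /= in h2.
have e1 := gen_eq1 h1; have e2 := gen_eq2 h2.
apply: (negP c12); apply/eqP; exact: (etrans (eqP e1) (esym (eqP e2))).
Qed.

Lemma PM_Nbar x : PM x -> Nbar (@PM PV) x.
Proof.
move=> h; exists 1; split => //; exists [:: x]; split.
  by move=> y; rewrite inE => /eqP ->.
by apply/ffunP => i; rewrite !ffunE big_cons big_nil mul1n addn0.
Qed.

Lemma PM_nz x : PM x -> x != vzero.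
Proof. by case=> c [q [_ ->]]; apply/eqP => /ffunP /(_ (inr c)); rewrite !ffunE eqxx. Qed.

Lemma sum_eq1 (T : finType) (a : T) : \sum_(x : T) (x == a : nat) = 1.
Proof.
rewrite (bigD1 a) //= eqxx big1 // => x /negbTE -> //.
Qed.

Lemma sum3 (T : finType) (a b d : T) : \sum_(x : T) ((x == a) + (x == b) + (x == d) : nat) = 3.
Proof. by rewrite !big_split /= !sum_eq1. Qed.

Lemma sum_in_card (T : finType) (A : {set T}) : \sum_(x : T) (x \in A : nat) = #|A|.
Proof.
rewrite -sum1_card [RHS]big_mkcond /=; apply: eq_bigr => i _.
by case: (i \in A).
Qed.

Lemma Eof_vv : Eof vv = petersenE.
Proof. by apply/setP => e; rewrite [LHS]in_set vvK; case: (e \in petersenE). Qed.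

Lemma problem_vv : problem vv.
Proof.
split; first by move=> e; rewrite vvK; exact: leq_b1.
split.
  exists 3 => x; case: (pv_surj x) => a ha ->.
  have /andP [/andP [hl ul] /eqP sz] := chk_iota inc_ok ha.
  by rewrite Eof_vv (inc_set ha) card_seqset1 ?uniq_map_ep // size_map.
rewrite card_PV.
rewrite (eq_bigr (fun c => (c == c1) + (c == c2) + (c == c3) : nat)); last first.
  by move=> c _; rewrite vvC.
rewrite sum3.
rewrite (eq_bigr (fun e => (e \in petersenE : nat))); last by move=> e _; rewrite vvK.
by rewrite sum_in_card card_E.
Qed.

Theorem mainTheorem13 :
  ~ B_factorizable petersenE /\
  exists v : vec PV,
    [/\ Nbar (@PM PV) v, problem v, Eof v = petersenE,
        Ncomb (@PM PV) (vscale 2 v) & additional_generator v].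
Proof.
split; last first.
  exists vv; split.
  - exact: Nb.
  - exact: problem_vv.
  - exact: Eof_vv.
  - exact: N2.
  - split; [exact: hilbert_Irr Irr_vv | exact: nPM].
move=> hB; have := hB vv Nb vvK; case=> s [hs ex].
case: Irr_vv => _ nz nred.
case: s hs ex => [|x [|y t]] hs ex.
- by move: nz; rewrite ex vsum_nil eqxx.
- by apply: nPM; rewrite ex vsum_cons vsum_nil vadd0; apply: hs; rewrite inE eqxx.
- apply: nred; exists x, (vsum (y :: t)); split.
  + by apply: PM_Nbar; apply: hs; rewrite inE eqxx.
  + apply: Nbar_vsum => w hw; apply: PM_Nbar; apply: hs; by rewrite inE hw orbT.
  + by apply: PM_nz; apply: hs; rewrite inE eqxx.
  + by rewrite vsum_cons; apply: vadd_nz; apply: PM_nz; apply: hs; rewrite !inE eqxx orbT.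
  + by rewrite ex vsum_cons.
Qed.
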